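(* Let $3\le q\le n$ be an integer, $\Lambda\subseteq\mathbb{Z}/q\mathbb{Z}$ non-empty, $\eta=|\mathrm{supp}\,\mathcal{D}_{q,\Lambda}|\cdot2^{-n}$, $\varepsilon\in[0,1]$, let $g\colon\{0,1\}^m\to\{0,1\}^n$ be $d$-local and $\mathcal{P}_g=g(\mathcal{U}^m)$. Suppose there are $r'\ge1$ non-connected neighborhoods $N_g(i_1),\dots,N_g(i_{r'})$ each of which is Type-1, i.e., with $s_a=|N_g(i_a)|$, the marginal $\mathcal{P}_g|_{N_g(i_a)}$ has total variation distance more than $\varepsilon$ from the uniform distribution $\mathcal{U}^{s_a}$. Then $$\|\mathcal{P}_g-\mathcal{D}_{q,\Lambda}\|\ge 1-\frac{2}{\eta}\exp\{-\varepsilon^2 r'/2\}.$$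
   Context: $\mathcal{U}^s$ is uniform on $\{0,1\}^s$. $\mathcal{D}_{q,\Lambda}$ is uniform over $x\in\{0,1\}^n$ with $|x|\bmod q\in\Lambda$ ($|x|$ the Hamming weight). $\mathcal{P}|_T$ is the marginal on coordinates $T$. A function $g$ is $d$-local if each output bit depends on at most $d$ input bits; $I_g(i)$ is the set of input coordinates on which output $i$ depends; $N_g(i)=\{j: I_g(j)\cap I_g(i)\neq\emptyset\}$. Neighborhoods are non-connected if the sets $\bigcup_{j\in N_g(i_a)}I_g(j)$ are pairwise disjoint. $\|\cdot\|$ is total variation distance. *)

(* Defs.v *)
From HB Require Import structures.
From mathcomp Require Import all_boot all_order all_algebra.
From mathcomp Require Import reals sequences exp.
Set Implicit Arguments. Unset Strict Implicit. Unset Printing Implicit Defensive.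
Import Order.TTheory GRing.Theory Num.Theory.
Local Open Scope ring_scope.

Definition bits (n : nat) := {ffun 'I_n -> bool}.

Definition flip (m : nat) (x : bits m) (j : 'I_m) : bits m :=
  [ffun k => if k == j then ~~ x k else x k].

Definition hweight (n : nat) (x : bits n) : nat := #|[set i | x i]|.

Definition depset (m n : nat) (g : bits m -> bits n) (i : 'I_n) : {set 'I_m} :=
  [set j | [exists x : bits m, g x i != g (flip x j) i]].

Definition is_local (m n d : nat) (g : bits m -> bits n) : Prop :=
  forall i, (#|depset g i| <= d)%N.

Definition nbhd (m n : nat) (g : bits m -> bits n) (i : 'I_n) : {set 'I_n} :=
  [set j | depset g j :&: depset g i != set0].

Definition nbhd_inputs (m n : nat) (g : bits m -> bits n) (i : 'I_n) : {set 'I_m} :=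
  \bigcup_(j in nbhd g i) depset g j.

(* distributions over a finite type are given by their pmf *)
Definition tvd (R : realType) (T : finType) (P Q : T -> R) : R :=
  2^-1 * \sum_(x : T) `|P x - Q x|.

Definition unif (R : realType) (T : finType) : T -> R := fun _ => (#|T|%:R)^-1.

Definition pushU (R : realType) (A B : finType) (f : A -> B) : B -> R :=
  fun y => #|[set a | f a == y]|%:R / #|A|%:R.

Definition Pg (R : realType) (m n : nat) (g : bits m -> bits n) : bits n -> R :=
  pushU R g.

Definition restr (n : nat) (S : {set 'I_n}) (x : bits n) :
  {ffun {i : 'I_n | i \in S} -> bool} := [ffun k => x (val k)].

(* marginal P|_S, a distribution on {0,1}^S (which has 2^|S| elements) *)
Definition marginal (R : realType) (n : nat) (S : {set 'I_n}) (P : bits n -> R)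
  : {ffun {i : 'I_n | i \in S} -> bool} -> R :=
  fun y => \sum_(x : bits n | restr S x == y) P x.

Definition suppD (n q : nat) (Lam : {set 'I_q}) : {set bits n} :=
  [set x : bits n | [exists l in Lam, (hweight x %% q)%N == val l]].

Arguments suppD : clear implicits.

Definition Dq (R : realType) (n q : nat) (Lam : {set 'I_q}) : bits n -> R :=
  fun x => if x \in suppD n q Lam then (#|suppD n q Lam|%:R)^-1 else 0.
Arguments Dq : clear implicits.
Arguments marginal R {n} S P _ : assert.
Arguments unif : clear implicits.
Arguments Pg R {m n} g _ : assert.
Arguments tvd {R T} P Q.

(* Main.v *)
Require Import Defs.
From HB Require Import structures.
From mathcomp Require Import all_boot all_order all_algebra.
From mathcomp Require Import reals sequences exp.
From mathcomp Require Import ring lra.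
Import Order.TTheory GRing.Theory Num.Theory.
Local Open Scope ring_scope.

Module P1.
Set Implicit Arguments. Unset Strict Implicit.

Section Prob.
Variable R : realType.

Definition Ex k (F : bits k -> R) : R := (#|bits k|%:R)^-1 * \sum_x F x.

Definition dep k (F : bits k -> R) (T : {set 'I_k}) :=
  forall x y : bits k, (forall j, j \in T -> x j = y j) -> F x = F y.

Definition mix k (T : {set 'I_k}) (x y : bits k) : bits k :=
  [ffun j => if j \in T then x j else y j].

Lemma card_bits_gt0 k : (0 < #|bits k|)%N.
Proof. by apply/card_gt0P; exists [ffun => false]. Qed.

Lemma Nbits_neq0 k : (#|bits k|%:R : R) != 0.
Proof. by rewrite pnatr_eq0 -lt0n card_bits_gt0. Qed.

Lemma sum_pair (A B : finType) (H : A * B -> R) :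
  \sum_p H p = \sum_a \sum_b H (a, b).
Proof. by rewrite pair_bigA; apply: eq_bigr => -[]. Qed.

Lemma indep2 k (F G : bits k -> R) T T' :
  dep F T -> dep G T' -> [disjoint T & T'] ->
  Ex (fun x => F x * G x) = Ex F * Ex G.
Proof.
move=> dF dG dTT.
set N := (#|bits k|%:R : R).
have HN : N != 0 by apply: Nbits_neq0.
pose phi (p : bits k * bits k) := (mix T p.1 p.2, mix T p.2 p.1).
have phiK : involutive phi.
  case=> x y; rewrite /phi /mix /=; congr pair; apply/ffunP=> j; rewrite !ffunE;
  by case: (j \in T).
have E1 : (\sum_x F x) * (\sum_y G y) = \sum_(p : bits k * bits k) F (phi p).1 * G (phi p).1.
  rewrite big_distrl /= sum_pair; apply: eq_bigr => x _.
  rewrite big_distrr /=; apply: eq_bigr => y _.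
  congr (_ * _).
    by apply: dF => j jT; rewrite /mix ffunE jT.
  apply: dG => j jT'; rewrite /mix ffunE.
  have -> : (j \in T) = false.
    by apply: (disjointFl dTT jT').
  by [].
have E2 : \sum_(p : bits k * bits k) F (phi p).1 * G (phi p).1 =
          \sum_(p : bits k * bits k) F p.1 * G p.1.
  by rewrite [RHS](reindex_inj (inv_inj phiK)).
rewrite /Ex.
have E3 : \sum_(p : bits k * bits k) F p.1 * G p.1 = N * \sum_x F x * G x.
  rewrite sum_pair /= big_distrr /=; apply: eq_bigr => x _.
  by rewrite sumr_const mulr_natl.
rewrite mulrACA E1 E2 E3 mulrA; congr (_ * _).
by rewrite divfK.
Qed.

Lemma dep_sub k (F : bits k -> R) (T T' : {set 'I_k}) : T \subset T' -> dep F T -> dep F T'.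
Proof. by move=> /subsetP sTT dF x y H; apply: dF => j jT; apply: H; apply: sTT. Qed.

Lemma Ex1 k : Ex (fun _ : bits k => 1) = 1.
Proof. by rewrite /Ex sumr_const mulVf // Nbits_neq0. Qed.

Lemma Ex_ext k (F G : bits k -> R) : (forall x, F x = G x) -> Ex F = Ex G.
Proof. by move=> H; rewrite /Ex; congr (_ * _); apply: eq_bigr => x _. Qed.

Lemma indep_seq k (I : finType) (F : I -> bits k -> R) (T : I -> {set 'I_k}) (s : seq I) :
  uniq s ->
  (forall a, a \in s -> dep (F a) (T a)) ->
  (forall a b, a \in s -> b \in s -> a != b -> [disjoint T a & T b]) ->
  Ex (fun x => \prod_(a <- s) F a x) = \prod_(a <- s) Ex (F a).
Proof.
elim: s => [|a s IH] /=.
  move=> _ _ _; rewrite big_nil; rewrite -[RHS](Ex1 k); by apply: Ex_ext => x; rewrite big_nil.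
move=> /andP[aNs us] dF dT.
rewrite big_cons -IH; last first.
- by move=> b c bs cs; apply: dT; rewrite inE ?bs ?cs orbT.
- by move=> b bs; apply: dF; rewrite inE bs orbT.
- by [].
rewrite (Ex_ext (G := fun x => F a x * \prod_(b <- s) F b x)); last by move=> x; rewrite big_cons.
apply: (@indep2 _ _ _ (T a) (\bigcup_(b | b \in s) T b)).
- by apply: dF; rewrite inE eqxx.
- move=> x y H; apply: eq_big_seq => b bs; apply: (dF b); first by rewrite inE bs orbT.
  move=> j jb; apply: H.
  by apply/bigcupP; exists b.
- apply/bigcup_disjointP => b bs.
  apply: dT; rewrite ?inE ?eqxx ?bs ?orbT //.
  by apply/eqP => ab; move: aNs; rewrite ab bs.
Qed.

End Prob.

End P1.
Import P1.

Module P2.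
Set Implicit Arguments. Unset Strict Implicit.

Lemma dep_out m n (g : bits m -> bits n) i (x y : bits m) :
  (forall j, j \in depset g i -> x j = y j) -> g x i = g y i.
Proof.
move H : #|[set j | x j != y j]| => k.
elim: k x H => [|k IH] x H Hag.
  have -> : x = y; last by [].
  apply/ffunP => j; apply/eqP; apply: contraT => Hj.
  by move: H => /eqP; rewrite cards_eq0 => /eqP/setP/(_ j); rewrite !inE Hj.
have [j Hj] : exists j, j \in [set j | x j != y j].
  by apply/set0Pn; rewrite -card_gt0 H.
have jN : j \notin depset g i.
  by apply: contraNN (_ : x j != y j) => [jd|]; [rewrite Hag | move: Hj; rewrite inE].
have -> : g x i = g (flip x j) i.
  move: jN; rewrite /depset inE negb_exists => /forallP /(_ x).
  by rewrite negbK => /eqP.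
apply: IH.
  have -> : [set j0 | flip x j j0 != y j0] = [set j | x j != y j] :\ j.
    apply/setP => j0; rewrite !inE /flip ffunE.
    have [->|ne] := eqVneq j0 j => //=.
    by move: Hj; rewrite inE; case: (x j); case: (y j).
  by rewrite (cardsD1 j) Hj in H; case: H.
move=> j0 j0d; rewrite /flip ffunE.
case: eqP => [e|_]; last by apply: Hag.
by subst j0; move: jN; rewrite j0d.
Qed.

End P2.
Import P2.

Module P3.
Set Implicit Arguments. Unset Strict Implicit.

Section Gen.
Variable R : realType.

Lemma abs_min (a b : R) : `|a - b| = a + b - 2 * Num.min a b.
Proof. case: lerP => h; rewrite ?distrC ?ger0_norm; try lra. Qed.

Lemma tvd_min (T : finType) (P Q : T -> R) :
  \sum_x P x = 1 -> \sum_x Q x = 1 ->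
  tvd P Q = 1 - \sum_x Num.min (P x) (Q x).
Proof.
move=> HP HQ; rewrite /tvd.
under eq_bigr do rewrite abs_min.
rewrite big_split /= big_split /= HP HQ sumrN -mulr_sumr.
set s := \sum_x _; lra.
Qed.

Lemma card_indic (T : finType) (p : pred T) :
  (#|[set x | p x]|%:R : R) = \sum_x (p x)%:R.
Proof.
rewrite -sum1_card natr_sum big_mkcond /=; apply: eq_bigr => x _.
by rewrite inE; case: (p x).
Qed.

Lemma indic_forall (I : finType) (c : I -> bool) :
  ([forall a, c a])%:R = \prod_a ((c a)%:R : R).
Proof.
case: (boolP [forall a, c a]) => H.
  by rewrite big1 // => a _; move/forallP: H => /(_ a) ->.
move: H; rewrite negb_forall => /existsP[a Ha].
by rewrite (bigD1 a) //= (negbTE Ha) mul0r.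
Qed.

Lemma min_le_sqrt (X Y c : R) : 0 <= X -> 0 <= Y -> 0 <= c -> X * Y <= c ^+ 2 ->
  Num.min X Y <= c.
Proof.
move=> hX hY hc hXY.
have hm : 0 <= Num.min X Y by rewrite le_min hX hY.
rewrite -(ler_pXn2r (n := 2)) ?nnegrE //.
apply: le_trans hXY.
rewrite expr2; case: (lerP X Y) => h.
  by apply: ler_pM; rewrite ?lexx.
by apply: ler_pM; rewrite ?lexx // ltW.
Qed.

Lemma bern_bc (p u eps : R) : 0 <= p <= 1 -> 0 <= u <= 1 -> 0 <= eps -> eps < p - u ->
  Num.sqrt (p * u) + Num.sqrt ((1 - p) * (1 - u)) <= expR (- eps ^+ 2 / 2).
Proof.
move=> /andP[p0 p1] /andP[u0 u1] e0 epu.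
set s := Num.sqrt (p * u); set t := Num.sqrt ((1 - p) * (1 - u)).
have s0 : 0 <= s by apply: sqrtr_ge0.
have t0 : 0 <= t by apply: sqrtr_ge0.
have s2 : s ^+ 2 = p * u by rewrite sqr_sqrtr // mulr_ge0.
have t2 : t ^+ 2 = (1 - p) * (1 - u) by rewrite sqr_sqrtr // mulr_ge0 // subr_ge0.
have st : 2 * (s * t) <= p * (1 - p) + u * (1 - u).
  rewrite -(ler_pXn2r (n := 2)) ?nnegrE //; last first.
    by rewrite addr_ge0 // mulr_ge0 // subr_ge0.
    by rewrite mulr_ge0 // mulr_ge0.
  rewrite exprMn exprMn s2 t2.
  have := sqr_ge0 (p * (1 - p) - u * (1 - u)); nra.
have e2 : 0 <= expR (- eps ^+ 2 / 2) by apply: expR_ge0.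
rewrite -(ler_pXn2r (n := 2)) ?nnegrE ?addr_ge0 //.
rewrite -expRM_natr.
have -> : - eps ^+ 2 / 2 * 2%:R = - eps ^+ 2 by rewrite divfK // pnatr_eq0.
apply: le_trans (expR_ge1Dx _).
rewrite sqrrD s2 t2.
have : eps ^+ 2 <= (p - u) ^+ 2.
  rewrite ler_pXn2r ?nnegrE //; lra.
nra.
Qed.

End Gen.

End P3.
Import P3.

Module P4.
Set Implicit Arguments. Unset Strict Implicit.

Section S4.
Variable R : realType.

Lemma push_sum m n (g : bits m -> bits n) (F : bits n -> R) :
  \sum_x Pg R g x * F x = Ex (fun w => F (g w)).
Proof.
rewrite /Pg /pushU /Ex.
transitivity (\sum_x \sum_w (#|bits m|%:R)^-1 * ((g w == x)%:R * F x)).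
  apply: eq_bigr => x _; rewrite card_indic mulrC mulr_suml mulr_sumr.
  by apply: eq_bigr => w _; ring.
rewrite exchange_big mulr_sumr /=; apply: eq_bigr => w _.
rewrite -mulr_sumr; congr (_ * _).
rewrite (bigD1 (g w)) //= eqxx mul1r big1 ?addr0 // => x.
by rewrite eq_sym => /negbTE ->; rewrite mul0r.
Qed.

Lemma sum_Pg m n (g : bits m -> bits n) : \sum_x Pg R g x = 1.
Proof.
rewrite -(Ex1 R m) -(push_sum g (fun _ => 1)).
by apply: eq_bigr => x _; rewrite mulr1.
Qed.

Lemma marg_sum n (S : {set 'I_n}) (Q : bits n -> R) (G : {ffun {i : 'I_n | i \in S} -> bool} -> R) :
  \sum_y G y * marginal R S Q y = \sum_x G (restr S x) * Q x.
Proof.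
rewrite [RHS](partition_big (restr S) predT) //=; apply: eq_bigr => y _.
rewrite /marginal big_distrr /=; apply: eq_bigr => x /eqP ->.
by [].
Qed.

Definition ext n (S : {set 'I_n}) (d : {ffun {i : 'I_n | i \in S} -> bool}) : bits n :=
  [ffun i => if insub i is Some k then d k else false].

Lemma restr_ext n (S : {set 'I_n}) d : restr S (ext d) = d.
Proof. by apply/ffunP => k; rewrite !ffunE valK. Qed.

Definition xorb_f n (z x : bits n) : bits n := [ffun i => xorb (x i) (z i)].

Lemma xorb_fK n (z : bits n) : involutive (xorb_f z).
Proof. by move=> x; apply/ffunP => i; rewrite !ffunE; case: (x i); case: (z i). Qed.

Lemma fiber_card n (S : {set 'I_n}) (y1 y2 : {ffun {i : 'I_n | i \in S} -> bool}) :
  #|[set x | restr S x == y1]| = #|[set x | restr S x == y2]|.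
Proof.
pose z := ext [ffun k => xorb (y1 k) (y2 k)].
rewrite -(card_imset _ (inv_inj (xorb_fK z))).
apply: eq_card => x; rewrite [in RHS]inE.
have Hr : forall x', restr S (xorb_f z x') = [ffun k => xorb (restr S x' k) (xorb (y1 k) (y2 k))].
  move=> x'; apply/ffunP => k; rewrite !ffunE /z /ext.
  by rewrite valK ffunE.
apply/imsetP/idP.
  case=> x' ; rewrite inE => /eqP Hx' ->.
  rewrite Hr Hx'; apply/eqP/ffunP => k; rewrite ffunE.
  by case: (y1 k); case: (y2 k).
move=> /eqP Hx; exists (xorb_f z x); last by rewrite xorb_fK.
rewrite inE Hr Hx; apply/eqP/ffunP => k; rewrite ffunE.
by case: (y1 k); case: (y2 k).
Qed.

Lemma marg_unif n (S : {set 'I_n}) y :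
  marginal R S (fun _ => (#|bits n|%:R)^-1) y =
  unif R {ffun {i : 'I_n | i \in S} -> bool} y.
Proof.
rewrite /marginal /unif sumr_const.
pose Y := ({ffun {i : 'I_n | i \in S} -> bool} : finType).
have HY : (#|Y|%:R : R) != 0 by rewrite pnatr_eq0 -lt0n; apply/card_gt0P; exists [ffun => false].
have HN := Nbits_neq0 R n.
have E : (#|bits n| = #|Y| * #|[set x | restr S x == y]|)%N.
  transitivity (\sum_(y' : Y) #|[set x | restr S x == y']|)%N.
    rewrite -sum1_card (partition_big (restr S) predT) //=.
    apply: eq_bigr => y' _; rewrite -sum1_card; apply: eq_bigl => x.
    by rewrite inE.
  rewrite (eq_bigr (fun _ => #|[set x | restr S x == y]|)) ?sum_nat_const //.
  by move=> y' _; apply: fiber_card.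
have -> : #|[pred x | restr S x == y]| = #|[set x | restr S x == y]|.
  by apply: eq_card => x; rewrite inE.
rewrite E natrM invfM -[_ *+ #|[set x | _]|]mulr_natr divfK //.
by move: HN; rewrite E natrM mulf_eq0 negb_or => /andP[_ ->].
Qed.

End S4.

End P4.
Import P4.

Module P5.
Set Implicit Arguments. Unset Strict Implicit.

Section S5.
Variable R : realType.

Lemma card_bits n : #|bits n| = (2 ^ n)%N.
Proof. by rewrite card_ffun card_bool card_ord. Qed.

Lemma supp_nonempty n q (Lam : {set 'I_q}) : (q <= n)%N -> Lam != set0 ->
  (0 < #|suppD n q Lam|)%N.
Proof.
move=> hqn /set0Pn[l hl].
have hln : (l <= n)%N by apply: leq_trans (ltnW (ltn_ord l)) hqn.
pose x : bits n := [ffun i : 'I_n => (i < l)%N].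
apply/card_gt0P; exists x; rewrite inE; apply/existsP; exists l; rewrite hl /=.
have -> : hweight x = l.
  rewrite /hweight.
  have -> : [set i | x i] = [set widen_ord hln j | j : 'I_l].
    apply/setP => i; rewrite inE ffunE; apply/idP/imsetP.
      by move=> il; exists (Ordinal il) => //; apply: val_inj.
    by case=> j _ ->; rewrite /= ltn_ord.
  rewrite card_imset ?card_ord //.
  by move=> j1 j2 /(congr1 val) /= /val_inj.
by rewrite modn_small.
Qed.

Lemma Ex_lin k (F : bits k -> R) : Ex (fun x => 1 - F x) = 1 - Ex F.
Proof.
rewrite /Ex sumrB mulrBr; congr (_ - _).
by rewrite sumr_const mulVf // Nbits_neq0.
Qed.

Lemma Ex_indic_range k (c : bits k -> bool) : 0 <= Ex (fun x => (c x)%:R : R) <= 1.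
Proof.
rewrite /Ex; apply/andP; split.
  by rewrite mulr_ge0 ?invr_ge0 ?ler0n // sumr_ge0 // => x _; rewrite ler0n.
rewrite -[X in _ <= X](Ex1 R k) /Ex ler_wpM2l ?invr_ge0 ?ler0n //.
by apply: ler_sum => x _; case: (c x).
Qed.

Lemma sum_min_le (T : finType) (p : pred T) (F G : T -> R) :
  \sum_(i | p i) Num.min (F i) (G i) <= Num.min (\sum_(i | p i) F i) (\sum_(i | p i) G i).
Proof.
rewrite le_min; apply/andP; split; apply: ler_sum => i _; by rewrite ge_min lexx ?orbT.
Qed.

Lemma abs_pos (a b : R) : `|a - b| = 2 * ((((b < a)%R)%:R : R) * (a - b)) - (a - b).
Proof. case: lerP => h /=; rewrite ?mul0r ?mul1r ?distrC ?ger0_norm; lra. Qed.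

Lemma tvd_pos (T : finType) (M Q : T -> R) : \sum_x M x = \sum_x Q x ->
  tvd M Q = \sum_x (((Q x < M x)%R)%:R : R) * (M x - Q x).
Proof.
move=> hs; rewrite /tvd.
under eq_bigr do rewrite abs_pos.
rewrite sumrB sumrB hs subrr subr0 -mulr_sumr; by rewrite mulrA mulVf ?mul1r // pnatr_eq0.
Qed.

End S5.

End P5.
Import P5.

Unset Implicit Arguments. Set Strict Implicit.

Theorem mainTheorem15 (R : realType) (n m d q r' : nat) (Lam : {set 'I_q})
  (eps : R) (g : bits m -> bits n) (idx : 'I_r' -> 'I_n) :
  (3 <= q)%N -> (q <= n)%N -> Lam != set0 ->
  0 <= eps -> eps <= 1 ->
  is_local d g ->
  (1 <= r')%N ->
  (forall a b : 'I_r', a != b ->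
     [disjoint nbhd_inputs g (idx a) & nbhd_inputs g (idx b)]) ->
  (forall a : 'I_r',
     tvd (marginal R (nbhd g (idx a)) (Pg R g))
         (unif R _) > eps) ->
  let eta : R := #|suppD n q Lam|%:R / 2 ^+ n in
  tvd (Pg R g) (Dq R n q Lam) >= 1 - 2 / eta * expR (- (eps ^+ 2 * r'%:R) / 2).
Proof.
move=> hq hqn hLam he0 he1 hloc hr hdisj htv; cbv zeta.
set eta : R := #|suppD n q Lam|%:R / 2 ^+ n.
set e := expR _.
set N : R := #|bits n|%:R.
have hN : N = 2 ^+ n by rewrite /N card_bits natrX.
have hN0 : N != 0 := Nbits_neq0 R n.
have hN0' : 0 < N by rewrite lt0r hN0 ler0n.
set Ssz : R := #|suppD n q Lam|%:R.
have hS0 : 0 < Ssz by rewrite ltr0n supp_nonempty.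
have hSN : Ssz <= N by rewrite ler_nat max_card.
have heta : eta = Ssz / N by rewrite /eta hN.
have heta0 : 0 < eta by rewrite heta divr_gt0.
have hetainv : 1 <= eta^-1.
  by rewrite heta invf_div ler_pdivlMr // mul1r.
have he0' : 0 <= e by apply: expR_ge0.
pose P := Pg R g.
pose D := Dq R n q Lam.
pose U := fun _ : bits n => N^-1.
have sumP : \sum_x P x = 1 by apply: sum_Pg.
have sumD : \sum_x D x = 1.
  rewrite /D /Dq -big_mkcond /= sumr_const -/Ssz.
  by rewrite -[_ *+ _]mulr_natr mulVf // gt_eqF.
rewrite (tvd_min sumP sumD).
have key1 : \sum_x Num.min (P x) (D x) <= eta^-1 * \sum_x Num.min (P x) (U x).
  rewrite mulr_sumr; apply: ler_sum => x _.
  have hD : D x <= eta^-1 * U x.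
    have -> : eta^-1 * U x = Ssz^-1 by rewrite /U heta; field; rewrite hN0 gt_eqF.
    rewrite /D /Dq; case: ifP => _; first by [].
    by rewrite invr_ge0 ltW.
  have hP0 : 0 <= P x by rewrite /P /Pg /pushU divr_ge0 ?ler0n.
  case: (lerP (P x) (U x)) => h.
    by rewrite ge_min ler_peMl.
  by rewrite ge_min hD orbT.
have key2 : \sum_x Num.min (P x) (U x) <= e.
  pose S := fun a : 'I_r' => nbhd g (idx a).
  pose f := fun (a : 'I_r') (x : bits n) =>
    (unif R _ (restr (S a) x) < marginal R (S a) P (restr (S a) x))%R.
  pose PB := fun (a : 'I_r') (b : bool) => Ex (fun w : bits m => ((f a (g w) == b)%:R : R)).
  pose UB := fun (a : 'I_r') (b : bool) => Ex (fun x : bits n => ((f a x == b)%:R : R)).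
  pose Z := fun x : bits n => [ffun a => f a x].
  have Zeq : forall y h, (Z y == h) = [forall a, f a y == h a].
    move=> y h; apply/eqP/forallP => [<- a|H]; first by rewrite ffunE.
    by apply/ffunP => a; rewrite ffunE; apply/eqP/H.
  have Sdisj : forall a b, a != b -> [disjoint S a & S b].
    move=> a b ab; rewrite -setI_eq0; apply/eqP/setP => j; rewrite inE in_set0.
    apply/negbTE/negP => /andP[ja jb].
    move: (ja); rewrite /S /nbhd inE => /set0Pn[k /setIP[kj _]].
    have ka : k \in nbhd_inputs g (idx a) by apply: (subsetP (bigcup_sup j ja)).
    have kb : k \in nbhd_inputs g (idx b) by apply: (subsetP (bigcup_sup j jb)).
    by rewrite (disjointFr (hdisj a b ab) ka) in kb.
  have depP : forall a b, dep (fun w => ((f a (g w) == b)%:R : R)) (nbhd_inputs g (idx a)).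
    move=> a b x y H; rewrite /f.
    have -> : restr (S a) (g x) = restr (S a) (g y); last by [].
    apply/ffunP => k; rewrite !ffunE; apply: dep_out => j jd; apply: H.
    by apply: (subsetP (bigcup_sup (val k) (valP k))).
  have depU : forall a b, dep (fun x => ((f a x == b)%:R : R)) (S a).
    move=> a b x y H; rewrite /f.
    have -> : restr (S a) x = restr (S a) y; last by [].
    by apply/ffunP => k; rewrite !ffunE; apply: H; apply: valP.
  have ZP : forall h, \sum_(x | Z x == h) P x = \prod_a PB a (h a).
    move=> h; rewrite big_mkcond /=.
    transitivity (\sum_x P x * ((Z x == h)%:R)).
      by apply: eq_bigr => x _; case: (Z x == h); rewrite ?mulr1 ?mulr0.
    rewrite push_sum (Ex_ext (G := fun w => \prod_a ((f a (g w) == h a)%:R : R))); last first.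
      by move=> w; rewrite Zeq indic_forall.
    apply: (indep_seq (T := fun a => nbhd_inputs g (idx a)) (F := fun a w => ((f a (g w) == h a)%:R : R))).
    - by apply: index_enum_uniq.
    - by move=> a _; apply: depP.
    - by move=> a b _ _; apply: hdisj.
  have ZU : forall h, \sum_(x | Z x == h) U x = \prod_a UB a (h a).
    move=> h; rewrite big_mkcond /=.
    transitivity (Ex (fun x => ((Z x == h)%:R : R))).
      by rewrite /Ex mulr_sumr; apply: eq_bigr => x _; case: (Z x == h); rewrite ?mulr1 ?mulr0.
    rewrite (Ex_ext (G := fun x => \prod_a ((f a x == h a)%:R : R))); last first.
      by move=> w; rewrite Zeq indic_forall.
    apply: (indep_seq (T := S) (F := fun a x => ((f a x == h a)%:R : R))).
    - by apply: index_enum_uniq.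
    - by move=> a _; apply: depU.
    - by move=> a b _ _; apply: Sdisj.
  have PBr : forall a b, 0 <= PB a b <= 1 by move=> a b; apply: Ex_indic_range.
  have UBr : forall a b, 0 <= UB a b <= 1 by move=> a b; apply: Ex_indic_range.
  have gap : forall a, eps < PB a true - UB a true.
    move=> a.
    pose G := fun y => (((unif R _ y < marginal R (S a) P y)%R)%:R : R).
    have e1 : PB a true = \sum_y G y * marginal R (S a) P y.
      rewrite marg_sum /PB -(push_sum g (fun x => ((f a x == true)%:R : R))); apply: eq_bigr => x _.
      by rewrite mulrC eqb_id.
    have e2 : UB a true = \sum_y G y * unif R _ y.
      rewrite -(eq_bigr _ (fun y _ => congr1 (fun t => G y * t) (marg_unif R y))).
      rewrite marg_sum /UB /Ex mulr_sumr; apply: eq_bigr => x _.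
      by rewrite mulrC eqb_id.
    have sM : \sum_y marginal R (S a) P y = 1.
      transitivity (\sum_y 1 * marginal R (S a) P y); first by apply: eq_bigr => y _; rewrite mul1r.
      by rewrite marg_sum -[RHS]sumP; apply: eq_bigr => x _; rewrite mul1r.
    have sU : \sum_y unif R {ffun {i : 'I_n | i \in S a} -> bool} y = 1.
      rewrite /unif sumr_const -[_ *+ _]mulr_natr mulVf // pnatr_eq0 -lt0n.
      by apply/card_gt0P; exists [ffun => false].
    have := htv a; rewrite (tvd_pos (etrans sM (esym sU))) e1 e2 -sumrB.
    suff -> : \sum_y (G y * marginal R (S a) P y - G y * unif R _ y) =
              \sum_y G y * (marginal R (S a) P y - unif R _ y) by [].
    by apply: eq_bigr => y _; rewrite mulrBr.
  have bc : forall a, \sum_b Num.sqrt (PB a b * UB a b) <= expR (- eps ^+ 2 / 2).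
    move=> a; rewrite big_bool /=.
    have -> : PB a false = 1 - PB a true.
      by rewrite /PB -Ex_lin; apply: Ex_ext => w; case: (f a (g w)); rewrite /= ?subrr ?subr0.
    have -> : UB a false = 1 - UB a true.
      by rewrite /UB -Ex_lin; apply: Ex_ext => w; case: (f a w); rewrite /= ?subrr ?subr0.
    by apply: bern_bc.
  rewrite (partition_big Z predT) //=.

  have H1 : \sum_j \sum_(i | Z i == j) Num.min (P i) (U i) <=
             \sum_(h : {ffun 'I_r' -> bool}) \prod_a Num.sqrt (PB a (h a) * UB a (h a)).
    apply: ler_sum => h _.
    apply: le_trans (sum_min_le _ _ _) _.
    rewrite ZP ZU.
    have PB0 : forall a b, 0 <= PB a b by move=> a b; case/andP: (PBr a b).
    have UB0 : forall a b, 0 <= UB a b by move=> a b; case/andP: (UBr a b).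
    apply: min_le_sqrt.
    - by apply: prodr_ge0 => a _.
    - by apply: prodr_ge0 => a _.
    - by apply: prodr_ge0 => a _; apply: sqrtr_ge0.
    rewrite -prodrXl [X in _ <= X](eq_bigr (fun a => PB a (h a) * UB a (h a))); first by rewrite [X in _ <= X]big_split.
    by move=> a _; rewrite sqr_sqrtr // mulr_ge0.
  apply: le_trans H1 _.
  rewrite -(bigA_distr_bigA (fun a b => Num.sqrt (PB a b * UB a b))) /=.
  have H2 : \prod_(i < r') \sum_j Num.sqrt (PB i j * UB i j) <=
            \prod_(i < r') expR (- eps ^+ 2 / 2).
    apply: ler_prod => a _; rewrite bc andbT.
    by apply: sumr_ge0 => b _; apply: sqrtr_ge0.
  apply: le_trans H2 _.
  rewrite prodr_const card_ord -expRM_natr.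
  suff -> : - eps ^+ 2 / 2 * r'%:R = - (eps ^+ 2 * r'%:R) / 2 by [].
  by rewrite mulrAC mulNr mulNr.
have : eta^-1 * \sum_x Num.min (P x) (U x) <= eta^-1 * e.
  by rewrite ler_wpM2l // invr_ge0 ltW.
have : eta^-1 * e <= 2 / eta * e.
  rewrite ler_wpM2r // -[2 / eta]/(2 * eta^-1); move: hetainv; lra.
lra.
Qed.
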